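(* Let $\mathcal B^L_\Omega,\mathcal B^P_\Omega>0$ be constants such that $\|P_{L'}^*-P_L^*\|\le\mathcal B^P_\Omega\|L'-L\|$ whenever $L,L'\in\Omega$ and $\|L'-L\|\le\mathcal B^L_\Omega$ (such constants exist under the standing assumptions), and assume $B\ne0$, $C\ne0$. For any $L,L'\in\Omega$ with $$\|L'-L\|\le\min\Big\{\mathcal B^L_\Omega,\ \frac{\|B\|(\mathcal B^P_\Omega\|\tilde A_L-BK(L)\|+\|P_L^*\|\|C\|)}{\mathcal B^P_\Omega\|B\|\|C\|}\Big\},$$ it holds that $\|K(L')-K(L)\|\le\dfrac{2\|B\|(\mathcal B^P_\Omega\|\tilde A_L-BK(L)\|+\|P_L^*\|\|C\|)}{\sigma_{\min}(R^u)}\|L'-L\|$.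
   Context: Zero-sum LQ game: $A\in\mathbb R^{d\times d}$, $B\in\mathbb R^{d\times m_1}$, $C\in\mathbb R^{d\times m_2}$, symmetric positive definite $Q,R^u,R^v$. For $L$ with $Q-L^\top R^vL\succ0$: $\tilde A_L=A-CL$, $P_L^*\succ0$ is the stabilizing solution of $P=Q-L^\top R^vL+\tilde A_L^\top P\tilde A_L-\tilde A_L^\top PB(R^u+B^\top PB)^{-1}B^\top P\tilde A_L$, and $K(L)=(R^u+B^\top P_L^*B)^{-1}B^\top P_L^*\tilde A_L$. Standing assumptions: $\mathbb E[x_0x_0^\top]\succ0$; the GARE $P=A^\top PA+Q-[A^\top PB\ \ A^\top PC]\begin{bmatrix}R^u+B^\top PB & B^\top PC\\ C^\top PB & -R^v+C^\top PC\end{bmatrix}^{-1}\begin{bmatrix}B^\top PA\\ C^\top PA\end{bmatrix}$ has a minimal positive definite solution $P^*$ with $R^v-C^\top P^*C\succ0$, and $Q-(L^* )^\top R^vL^*\succ0$ for $L^*=[-R^v+C^\top P^*C-C^\top P^*B(R^u+B^\top P^*B)^{-1}B^\top P^*C]^{-1}[C^\top P^*A-C^\top P^*B(R^u+B^\top P^*B)^{-1}B^\top P^*A]$. $0<\zeta<\sigma_{\min}(Q-(L^* )^\top R^vL^* )$, $\Omega=\{L:Q-L^\top R^vL\succeq\zeta I\}$. $\|\cdot\|$ is the spectral norm. *)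

(* Defs.v *)
From HB Require Import structures.
From mathcomp Require Import all_boot all_order all_algebra.
From Stdlib Require Import ClassicalEpsilon.
Set Implicit Arguments. Unset Strict Implicit. Unset Printing Implicit Defensive.
Import Order.TTheory GRing.Theory Num.Theory.
Local Open Scope ring_scope.

Section LQDefs.
Variable R : rcfType.

Definition vnorm n (x : 'cV[R]_n) : R := Num.sqrt (\sum_i (x i 0) ^+ 2).

Definition is_opnorm m n (A : 'M[R]_(m, n)) (c : R) : Prop :=
  (forall x : 'cV[R]_n, vnorm (A *m x) <= c * vnorm x) /\
  (forall c' : R, (forall x : 'cV[R]_n, vnorm (A *m x) <= c' * vnorm x) -> c <= c').

Definition opnorm m n (A : 'M[R]_(m, n)) : R :=
  match excluded_middle_informative (exists c, is_opnorm A c) with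
  | left H => proj1_sig (constructive_indefinite_description _ H)
  | right _ => 0
  end.

Definition is_sigmin n (A : 'M[R]_n) (c : R) : Prop :=
  (forall x : 'cV[R]_n, c * vnorm x <= vnorm (A *m x)) /\
  (forall c' : R, (forall x : 'cV[R]_n, c' * vnorm x <= vnorm (A *m x)) -> c' <= c).

Definition sigmin n (A : 'M[R]_n) : R :=
  match excluded_middle_informative (exists c, is_sigmin A c) with
  | left H => proj1_sig (constructive_indefinite_description _ H)
  | right _ => 0
  end.

Definition qf n (M : 'M[R]_n) (x : 'cV[R]_n) : R := (x^T *m M *m x) 0 0.

Definition posdef n (M : 'M[R]_n) : Prop :=
  M^T = M /\ forall x : 'cV[R]_n, x != 0 -> 0 < qf M x.

Definition mx_ge n (M N : 'M[R]_n) : Prop := forall x : 'cV[R]_n, qf N x <= qf M x.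

Definition mxpow n (M : 'M[R]_n) (k : nat) : 'M[R]_n := iter k (mulmx M) 1%:M.

(* Schur stability: M^k -> 0 (equivalently spectral radius < 1) *)
Definition schur_stable n (M : 'M[R]_n) : Prop :=
  forall eps : R, 0 < eps -> exists N : nat, forall k : nat, (N <= k)%N ->
    forall i j, `|mxpow M k i j| < eps.

Section Game.
Variables (d m1 m2 : nat) (A : 'M[R]_d) (B : 'M[R]_(d, m1)) (C : 'M[R]_(d, m2))
  (Q : 'M[R]_d) (Ru : 'M[R]_m1) (Rv : 'M[R]_m2).

Definition Atil (L : 'M[R]_(m2, d)) : 'M[R]_d := A - C *m L.

(* K(L) computed from a matrix P (to be instantiated with P_L^* ) *)
Definition Kof (P : 'M[R]_d) (L : 'M[R]_(m2, d)) : 'M[R]_(m1, d) :=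
  invmx (Ru + B^T *m P *m B) *m B^T *m P *m Atil L.

Definition ric_rhs (P : 'M[R]_d) (L : 'M[R]_(m2, d)) : 'M[R]_d :=
  Q - L^T *m Rv *m L + (Atil L)^T *m P *m Atil L
  - (Atil L)^T *m P *m B *m invmx (Ru + B^T *m P *m B) *m B^T *m P *m Atil L.

Definition stabilizing_sol (L : 'M[R]_(m2, d)) (P : 'M[R]_d) : Prop :=
  posdef P /\ P = ric_rhs P L /\ schur_stable (Atil L - B *m Kof P L).

Definition gare_rhs (P : 'M[R]_d) : 'M[R]_d :=
  A^T *m P *m A + Q
  - row_mx (A^T *m P *m B) (A^T *m P *m C)
    *m invmx (block_mx (Ru + B^T *m P *m B) (B^T *m P *m C)
                       (C^T *m P *m B) (- Rv + C^T *m P *m C))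
    *m col_mx (B^T *m P *m A) (C^T *m P *m A).

Definition gare_sol (P : 'M[R]_d) : Prop := P = gare_rhs P.

Definition gare_minimal_pd (P : 'M[R]_d) : Prop :=
  posdef P /\ gare_sol P /\ forall P', posdef P' -> gare_sol P' -> mx_ge P' P.

Definition Lstar (P : 'M[R]_d) : 'M[R]_(m2, d) :=
  invmx (- Rv + C^T *m P *m C
         - C^T *m P *m B *m invmx (Ru + B^T *m P *m B) *m B^T *m P *m C)
  *m (C^T *m P *m A
      - C^T *m P *m B *m invmx (Ru + B^T *m P *m B) *m B^T *m P *m A).

Definition inOmega (zeta : R) (L : 'M[R]_(m2, d)) : Prop :=
  mx_ge (Q - L^T *m Rv *m L) (zeta%:M).

End Game.
End LQDefs.

(* Main.v *)
Require Import Defs.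
From HB Require Import structures.
From mathcomp Require Import all_boot all_order all_algebra.
From mathcomp Require Import sesquilinear spectral complex.
From mathcomp Require Import ring lra.
From Stdlib Require Import ClassicalEpsilon.
Set Implicit Arguments. Unset Strict Implicit. Unset Printing Implicit Defensive.
Import Order.TTheory GRing.Theory Num.Theory.
Local Open Scope ring_scope.

Section Key.
Variable R : rcfType.
Local Open Scope sesquilinear_scope.
Local Notation C := (R[i]).
Local Notation toC := (real_complex R).

Lemma ReD (x y : C) : complex.Re (x + y) = complex.Re x + complex.Re y. Proof. by move: x y => [a b] [c d]. Qed.
Lemma ImD (x y : C) : complex.Im (x + y) = complex.Im x + complex.Im y. Proof. by move: x y => [a b] [c d]. Qed.
Lemma ReM (a : R) (z : C) : complex.Re (toC a * z) = a * complex.Re z.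
Proof. by case: z => x y /=; rewrite mul0r subr0. Qed.
Lemma ImM (a : R) (z : C) : complex.Im (toC a * z) = a * complex.Im z.
Proof. by case: z => x y /=; rewrite mul0r addr0. Qed.

Lemma key_sym n (S : 'M[R]_n.+1) : S^T = S ->
  exists lam (v : 'cV[R]_n.+1), v != 0 /\ S *m v = lam *: v /\
   forall x : 'cV_n.+1, (x^T *m S *m x) 0 0 <= lam * (x^T *m x) 0 0.
Proof.
move=> Ssym.
pose SC := map_mx toC S.
have SCh : SC \is hermsymmx.
  apply/is_hermitianmxP; rewrite expr0 scale1r; apply/matrixP => i j.
  by rewrite !mxE -{1}Ssym mxE conj_Creal // complex_real.
have := hermitian_spectral_diag_real SCh.
set P := spectralmx SC; set D := spectral_diag SC => Dreal.
have PU : P \is unitarymx := spectral_unitarymx SC.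
have SCE : SC = P^t* *m diag_mx D *m P.
  by rewrite -invmx_unitary //; apply/orthomx_spectralP/hermitian_normalmx.
have PtP : P^t* *m P = 1%:M.
  by have := mulmxKtV (1%:M) PU (erefl _); rewrite mul1mx.
have PPt : P *m P^t* = 1%:M by apply/unitarymxP.
pose f i := complex.Re (D 0 i).
have DE : forall i, D 0 i = toC (f i).
  move=> i; rewrite /f RRe_real //.
  by move/mxOverP: Dreal => /(_ 0 i).
pose k := [arg max_(k > ord0) f k]%O.
have kmax : forall i, f i <= f k.
  by rewrite /k; case: arg_maxP => // j _ H i; apply: H.
exists (f k).
pose e : 'cV[C]_n.+1 := delta_mx k 0.
pose u := P^t* *m e.
have SCu : SC *m u = toC (f k) *: u.
  rewrite /u SCE -!mulmxA (mulmxA P) PPt mul1mx.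
  have -> : diag_mx D *m e = D 0 k *: e.
    apply/matrixP => i j; rewrite mul_diag_mx !mxE.
    case: (eqVneq i k) => [->|]; first by rewrite DE.
    by move=> _ /=; rewrite !mulr0.
  by rewrite -scalemxAr DE.
have u0 : u != 0.
  apply/eqP => u0; have : P *m u = e by rewrite /u mulmxA PPt mul1mx.
  rewrite u0 mulmx0 => /matrixP /(_ k 0); rewrite !mxE !eqxx /=.
  by move/eqP; rewrite eq_sym oner_eq0.
clearbody u.
pose a := map_mx (@complex.Re R) u; pose b := map_mx (@complex.Im R) u.
have Hu : forall i j, (\sum_l toC (S i l) * u l j) = toC (f k) * u i j.
  move=> i j; have := congr1 (fun M : 'M[C]_(n.+1,1) => M i j) SCu; rewrite /= !mxE => <-.
  by apply: eq_bigr => l _; congr (_ * _); rewrite /SC mxE.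
have Sa : S *m a = f k *: a.
  apply/matrixP => i j; rewrite !mxE.
  have := congr1 (@complex.Re R) (Hu i j); rewrite ReM => <-.
  rewrite (big_morph (@complex.Re R) ReD (erefl _)).
  by apply: eq_bigr => l _; rewrite ReM mxE.
have Sb : S *m b = f k *: b.
  apply/matrixP => i j; rewrite !mxE.
  have := congr1 (@complex.Im R) (Hu i j); rewrite ImM => <-.
  rewrite (big_morph (@complex.Im R) ImD (erefl _)).
  by apply: eq_bigr => l _; rewrite ImM mxE.
have Hq : forall x : 'cV_n.+1, (x^T *m S *m x) 0 0 <= f k * (x^T *m x) 0 0.
  move=> x; pose xC := map_mx toC x.
  have E1 : toC ((x^T *m S *m x) 0 0) = (xC^T *m SC *m xC) 0 0.
    by rewrite /xC /SC map_trmx -!map_mxM [RHS]mxE.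
  have E2 : toC ((x^T *m x) 0 0) = (xC^T *m xC) 0 0.
    by rewrite /xC map_trmx -!map_mxM [RHS]mxE.
  have xCr : xC^t* = xC^T.
    by apply/matrixP=> i j; rewrite !mxE conj_Creal // complex_real.
  pose y := P *m xC.
  have yt : xC^T *m P^t* = y^t*.
    by rewrite /y trmx_mul map_mxM xCr.
  have E3 : xC^T *m SC *m xC = y^t* *m diag_mx D *m y.
    by rewrite SCE !mulmxA yt -!mulmxA.
  have E4 : xC^T *m xC = y^t* *m y.
    by rewrite -yt -mulmxA (mulmxA _ P) PtP mul1mx.
  rewrite -lecR rmorphM /= E1 E2 E3 E4 !mxE mulr_sumr.
  apply: ler_sum => i _; rewrite mul_mx_diag !mxE.
  set z := (\sum_j _); rewrite (mulrC z^*) -mulrA; apply: ler_wpM2r.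
    by rewrite mulrC mul_conjC_ge0.
  by rewrite DE lecR kmax.
case: (eqVneq a 0) => a0.
  exists b; split => //; apply/eqP => b0; move/eqP: u0; apply.
  apply/matrixP => i j; have := congr1 (fun M : 'M[R]_(n.+1,1) => M i j) a0.
  have := congr1 (fun M : 'M[R]_(n.+1,1) => M i j) b0; rewrite !mxE.
  by case: (u i j) => re im /= -> ->.
by exists a.
Qed.
End Key.

Section Norms.
Variable R : rcfType.

Definition nn n (x : 'cV[R]_n) : R := \sum_i (x i 0) ^+ 2.
Definition dot n (x y : 'cV[R]_n) : R := \sum_i x i 0 * y i 0.

Lemma dotE n (x y : 'cV[R]_n) : (x^T *m y) 0 0 = dot x y.
Proof. by rewrite mxE; apply: eq_bigr => i _; rewrite mxE. Qed.

Lemma nnE n (x : 'cV[R]_n) : nn x = dot x x.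
Proof. by apply: eq_bigr => i _; rewrite expr2. Qed.

Lemma dotC n (x y : 'cV[R]_n) : dot x y = dot y x.
Proof. by apply: eq_bigr => i _; rewrite mulrC. Qed.

Lemma nn_ge0 n (x : 'cV[R]_n) : 0 <= nn x.
Proof. by apply: sumr_ge0 => i _; rewrite sqr_ge0. Qed.

Lemma nn_eq0 n (x : 'cV[R]_n) : nn x = 0 -> x = 0.
Proof.
move=> /psumr_eq0P H; apply/matrixP => i j; rewrite ord1 mxE.
by apply/eqP; rewrite -sqrf_eq0; apply/eqP; apply: H => // k _; rewrite sqr_ge0.
Qed.

Lemma nn_gt0 n (x : 'cV[R]_n) : x != 0 -> 0 < nn x.
Proof.
move=> x0; rewrite lt_def nn_ge0 andbT; apply/eqP => /nn_eq0 H.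
by rewrite H eqxx in x0.
Qed.

Lemma vnormE n (x : 'cV[R]_n) : vnorm x = Num.sqrt (nn x).
Proof. by []. Qed.

Lemma vnorm_ge0 n (x : 'cV[R]_n) : 0 <= vnorm x.
Proof. exact: sqrtr_ge0. Qed.

Lemma vnorm_sqr n (x : 'cV[R]_n) : vnorm x ^+ 2 = nn x.
Proof. by rewrite vnormE sqr_sqrtr // nn_ge0. Qed.

Lemma vnorm_gt0 n (x : 'cV[R]_n) : x != 0 -> 0 < vnorm x.
Proof. by move=> x0; rewrite vnormE sqrtr_gt0 nn_gt0. Qed.

Lemma nn_lin n (p q : R) (x y : 'cV[R]_n) :
  nn (p *: x + q *: y) = p ^+ 2 * nn x + 2 * p * q * dot x y + q ^+ 2 * nn y.
Proof.
rewrite /nn /dot !mulr_sumr -!big_split /=; apply: eq_bigr => i _.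
rewrite !mxE; rewrite /GRing.scale /=. ring.
Qed.

Lemma CS n (x y : 'cV[R]_n) : dot x y ^+ 2 <= nn x * nn y.
Proof.
case: (eqVneq y 0) => [->|y0].
  rewrite /dot big1 ?expr0n ?mulr_ge0 ?nn_ge0 // => i _.
  by rewrite mxE mulr0.
have a0 := nn_gt0 y0.
have := nn_ge0 (nn y *: x + (- dot x y) *: y).
rewrite nn_lin => H.
have : 0 <= nn y * (nn y * nn x - dot x y ^+ 2).
  by apply: le_trans H _; rewrite le_eqVlt; apply/orP; left; apply/eqP; ring.
by rewrite pmulr_rge0 // subr_ge0 mulrC.
Qed.

Lemma dot_le n (x y : 'cV[R]_n) : dot x y <= vnorm x * vnorm y.
Proof.
apply: le_trans (ler_norm _) _.
rewrite -(@ler_pXn2r _ 2) // ?nnegrE ?mulr_ge0 ?vnorm_ge0 //.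
by rewrite real_normK ?num_real // exprMn !vnorm_sqr CS.
Qed.

Lemma vnormD n (x y : 'cV[R]_n) : vnorm (x + y) <= vnorm x + vnorm y.
Proof.
rewrite -(@ler_pXn2r _ 2) // ?nnegrE ?addr_ge0 ?vnorm_ge0 //.
  have := nn_lin 1 1 x y; rewrite !scale1r !expr1n !mul1r !mulr1 vnorm_sqr => ->.
  rewrite sqrrD !vnorm_sqr -mulr_natr; have := dot_le x y; lra.
Qed.

Lemma vnormZ n (c : R) (x : 'cV[R]_n) : vnorm (c *: x) = `|c| * vnorm x.
Proof.
rewrite !vnormE.
have -> : nn (c *: x) = c ^+ 2 * nn x.
  by rewrite /nn mulr_sumr; apply: eq_bigr => i _; rewrite mxE exprMn.
by rewrite sqrtrM ?sqr_ge0 // sqrtr_sqr.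
Qed.

Lemma vnormN n (x : 'cV[R]_n) : vnorm (- x) = vnorm x.
Proof. by rewrite -scaleN1r vnormZ normrN normr1 mul1r. Qed.

Lemma vnormB n (x y : 'cV[R]_n) : vnorm (x - y) <= vnorm x + vnorm y.
Proof. by rewrite -(vnormN y); apply: vnormD. Qed.

Lemma vnorm0 n : vnorm (0 : 'cV[R]_n) = 0.
Proof. by rewrite -(scale0r (0 : 'cV[R]_n)) vnormZ normr0 mul0r. Qed.

End Norms.

Section Op.
Variable R : rcfType.

Lemma qf_nn m n (A : 'M[R]_(m,n)) x : (x^T *m (A^T *m A) *m x) 0 0 = nn (A *m x).
Proof. by rewrite nnE -dotE trmx_mul !mulmxA. Qed.

Lemma opnorm_exists m n (A : 'M[R]_(m,n)) : (0 < n)%N ->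
  exists c, is_opnorm A c /\ 0 <= c.
Proof.
case: n A => // n A _.
have Ssym : (A^T *m A)^T = A^T *m A by rewrite trmx_mul trmxK.
have [lam [v [v0 [Sv Hb]]]] := key_sym Ssym.
have nv := nn_gt0 v0.
have Hv : nn (A *m v) = lam * nn v.
  by rewrite -qf_nn -mulmxA Sv -scalemxAr mxE dotE -nnE.
have l0 : 0 <= lam by rewrite -(pmulr_lge0 _ nv) -Hv nn_ge0.
exists (Num.sqrt lam); split; last exact: sqrtr_ge0.
split.
  move=> x; rewrite !vnormE -sqrtrM // ler_wsqrtr //.
  by have := Hb x; rewrite qf_nn dotE -nnE.
move=> c' Hc'; have := Hc' v; rewrite [vnorm (A *m v)]vnormE Hv sqrtrM // -vnormE.
by rewrite ler_pM2r // vnorm_gt0.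
Qed.

Lemma opnormP m n (A : 'M[R]_(m,n)) : (0 < n)%N ->
  is_opnorm A (opnorm A) /\ 0 <= opnorm A.
Proof.
move=> n0; have [c [Hc c0]] := opnorm_exists A n0.
rewrite /opnorm; case: excluded_middle_informative => [H|[]]; last by exists c.
case: constructive_indefinite_description => c1 /= Hc1; split => //.
by apply: le_trans c0 _; apply: (proj2 Hc); apply: (proj1 Hc1).
Qed.

Lemma opnorm_bound m n (A : 'M[R]_(m,n)) : (0 < n)%N ->
  forall x, vnorm (A *m x) <= opnorm A * vnorm x.
Proof. by move=> n0; case: (opnormP A n0) => [[]]. Qed.

Lemma opnorm_le m n (A : 'M[R]_(m,n)) c : (0 < n)%N ->
  (forall x, vnorm (A *m x) <= c * vnorm x) -> opnorm A <= c.
Proof. by move=> n0; case: (opnormP A n0) => [[_ H] _]; apply: H. Qed.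

Lemma opnorm_ge0 m n (A : 'M[R]_(m,n)) : (0 < n)%N -> 0 <= opnorm A.
Proof. by move=> n0; case: (opnormP A n0). Qed.

Lemma cancel_v (mu t v : R) : 0 <= v -> 0 <= t -> mu * v ^+ 2 <= v * t -> mu * v <= t.
Proof.
move=> v0 t0; case: (eqVneq v 0) => [->|vn0]; first by rewrite mulr0.
have vp : 0 < v by rewrite lt_def vn0 v0.
have E : v * (mu * v) = mu * v ^+ 2 by ring.
by move=> H; rewrite -(ler_pM2l vp) E.
Qed.

Lemma opnorm_tr m n (A : 'M[R]_(m,n)) : (0 < n)%N ->
  forall x, vnorm (A^T *m x) <= opnorm A * vnorm x.
Proof.
move=> n0 x; set w := A^T *m x.
have H : nn w = dot (A *m w) x by rewrite nnE -!dotE {2}/w mulmxA -trmx_mul.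
have : nn w <= opnorm A * vnorm w * vnorm x.
  rewrite H; apply: le_trans (dot_le _ _) _.
  by rewrite ler_wpM2r ?vnorm_ge0 // opnorm_bound.
rewrite -vnorm_sqr => H2.
rewrite -[vnorm w]mul1r; apply: cancel_v; rewrite ?vnorm_ge0 ?mulr_ge0 ?opnorm_ge0 //.
  exact: vnorm_ge0.
by rewrite mul1r; apply: le_trans H2 _; rewrite le_eqVlt; apply/orP; left; apply/eqP; ring.
Qed.

Lemma qf0 n (P : 'M[R]_n) : qf P 0 = 0.
Proof. by rewrite /qf mulmx0 mxE. Qed.

Lemma posdef_qf_ge0 n (P : 'M[R]_n) : posdef P -> forall x, 0 <= qf P x.
Proof.
move=> [_ HP] x; case: (eqVneq x 0) => [->|x0]; first by rewrite qf0.
exact/ltW/HP.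
Qed.

Lemma qf_dot n (P : 'M[R]_n) x : qf P x = dot x (P *m x).
Proof. by rewrite /qf -mulmxA dotE. Qed.

Lemma sigmin_posdef n (Ru : 'M[R]_n) : (0 < n)%N -> posdef Ru ->
  0 < sigmin Ru /\ forall x, sigmin Ru * nn x <= qf Ru x.
Proof.
case: n Ru => // n Ru _ HRu.
have Ssym : (- Ru)^T = - Ru by rewrite linearN /= (proj1 HRu).
have [lam [w [w0 [Sw Hb]]]] := key_sym Ssym.
set mu := - lam.
have Rw : Ru *m w = mu *: w by rewrite scaleNr -Sw mulNmx opprK.
have Hq : forall x, mu * nn x <= qf Ru x.
  move=> x; have := Hb x; rewrite mulmxN mulNmx mxE dotE -nnE -/(qf Ru x).
  rewrite /mu; lra.
have nw := nn_gt0 w0.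
have mu0 : 0 < mu.
  have := (proj2 HRu) w w0; rewrite qf_dot Rw dotC.
  rewrite /dot.
  have -> : \sum_i (mu *: w) i 0 * w i 0 = mu * nn w.
    by rewrite /nn mulr_sumr; apply: eq_bigr => i _; rewrite mxE expr2 mulrA.
  by rewrite pmulr_lgt0.
have Hs : is_sigmin Ru mu.
  split.
    move=> x; apply: cancel_v; rewrite ?vnorm_ge0 // vnorm_sqr.
    by apply: le_trans (Hq x) _; rewrite qf_dot dot_le.
  move=> c' Hc'; have := Hc' w; rewrite Rw vnormZ ger0_norm; last exact: ltW.
  by rewrite ler_pM2r // vnorm_gt0.
suff -> : sigmin Ru = mu by [].
rewrite /sigmin; case: excluded_middle_informative => [H|[]]; last by exists mu.
case: constructive_indefinite_description => c1 /= Hc1.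
apply/eqP; rewrite eq_le; apply/andP; split.
  by apply: (proj2 Hs); apply: (proj1 Hc1).
by apply: (proj2 Hc1); apply: (proj1 Hs).
Qed.

Lemma inv_bound n (Ru X : 'M[R]_n) : (0 < n)%N -> posdef Ru ->
  (forall y, 0 <= qf X y) ->
  (Ru + X) \in unitmx /\
  forall z, sigmin Ru * vnorm (invmx (Ru + X) *m z) <= vnorm z.
Proof.
move=> n0 HRu HX; have [mu0 Hq] := sigmin_posdef n0 HRu.
set mu := sigmin Ru in mu0 Hq *.
have Hy : forall y, mu * vnorm y <= vnorm ((Ru + X) *m y).
  move=> y; apply: cancel_v; rewrite ?vnorm_ge0 // vnorm_sqr.
  apply: le_trans (Hq y) _; apply: le_trans (dot_le y ((Ru + X) *m y)).
  rewrite -qf_dot; have -> : qf (Ru + X) y = qf Ru y + qf X y by rewrite /qf mulmxDr mulmxDl [LHS]mxE.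
  rewrite lerDl.
  exact: HX.
have Mu : (Ru + X) \in unitmx.
  rewrite unitmxE unitfE -det_tr; apply/negP => /det0P [v v0 Hv].
  have := Hy v^T; rewrite -[Ru + X]trmxK -trmx_mul Hv trmx0 vnorm0.
  apply/negP; rewrite -ltNge pmulr_rgt0 // vnorm_gt0 //.
  by rewrite trmx_eq0.
split => // z; have := Hy (invmx (Ru + X) *m z).
by rewrite mulKVmx.
Qed.

End Op.

Section Core.
Variable R : rcfType.

Lemma grp4 (V : zmodType) (a b e f : V) : a - f - (b + e) = a - b - e - f.
Proof. rewrite opprD !addrA -[RHS]addrA [- e - f]addrC addrA [a - f - b]addrAC //. Qed.

Lemma core d m1 m2 (A : 'M[R]_d) (B : 'M[R]_(d, m1)) (C : 'M[R]_(d, m2))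
  (Ru : 'M[R]_m1) (P P' : 'M[R]_d) (L L' : 'M[R]_(m2, d)) (BP : R) :
  (0 < d)%N -> (0 < m1)%N -> (0 < m2)%N ->
  posdef Ru -> posdef P -> posdef P' -> 0 < BP ->
  opnorm (P' - P) <= BP * opnorm (L' - L) ->
  BP * opnorm C * opnorm (L' - L) <=
     BP * opnorm (Atil A C L - B *m Kof A B C Ru P L) + opnorm P * opnorm C ->
  opnorm (Kof A B C Ru P' L' - Kof A B C Ru P L) <=
    2 * opnorm B * (BP * opnorm (Atil A C L - B *m Kof A B C Ru P L)
                    + opnorm P * opnorm C)
      / sigmin Ru * opnorm (L' - L).
Proof.
move=> d0 m10 m20 HRu HP HP' BP0 HLipP Hsmall.
set dL := L' - L in HLipP Hsmall *.
set K := Kof A B C Ru P L in Hsmall *.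
set K' := Kof A B C Ru P' L'.
set G := Atil A C L - B *m K in Hsmall *.
set M := Ru + B^T *m P *m B.
set M' := Ru + B^T *m P' *m B.
have qfX : forall Pm, posdef Pm -> forall y, 0 <= qf (B^T *m Pm *m B) y.
  move=> Pm HPm y.
  have -> : qf (B^T *m Pm *m B) y = qf Pm (B *m y) by rewrite /qf trmx_mul !mulmxA.
  exact: posdef_qf_ge0.
have [Mu _] := inv_bound m10 HRu (qfX P HP).
have [M'u HM'] := inv_bound m10 HRu (qfX P' HP').
have [mu0 _] := sigmin_posdef m10 HRu.
have HK : M *m K = B^T *m P *m Atil A C L.
  by rewrite /K /Kof -/M -!mulmxA mulKVmx.
have HAtil : Atil A C L' = Atil A C L - C *m dL.
  by rewrite /Atil /dL mulmxBr opprB addrA subrK.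
have Hid : K' - K = invmx M' *m (B^T *m (P' - P) *m G - B^T *m P' *m C *m dL).
  rewrite -[K' - K](mulKmx M'u); congr (_ *m _).
  rewrite mulmxBr.
  have E1 : M' *m K' = B^T *m P' *m Atil A C L - B^T *m P' *m C *m dL.
    by rewrite /K' /Kof -/M' -!mulmxA mulKVmx // HAtil !mulmxBr.
  have E2 : M' *m K = B^T *m P *m Atil A C L + B^T *m (P' - P) *m B *m K.
    have -> : M' = M + B^T *m (P' - P) *m B.
      by rewrite /M' /M mulmxBr mulmxBl -addrA (addrC (B^T *m P *m B)) subrK.
    by rewrite mulmxDl HK.
  have E3 : B^T *m (P' - P) *m Atil A C L =
            B^T *m P' *m Atil A C L - B^T *m P *m Atil A C L by rewrite (mulmxBr B^T P' P) mulmxBl.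
  rewrite E1 E2 /G (mulmxBr (B^T *m (P' - P)) (Atil A C L) (B *m K)) E3 (mulmxA _ B K).
  exact: grp4.
clearbody G.
set b := opnorm B; set c := opnorm C; set p := opnorm P; set g := opnorm G.
set nL := opnorm dL; set mu := sigmin Ru; set X := BP * g + p * c.
have b0 : 0 <= b by apply: opnorm_ge0.
have c0 : 0 <= c by apply: opnorm_ge0.
have p0 : 0 <= p by apply: opnorm_ge0.
have g0 : 0 <= g by apply: opnorm_ge0.
have nL0 : 0 <= nL by apply: opnorm_ge0.
have Hx : forall x, vnorm ((K' - K) *m x) <= (2 * b * X / mu * nL) * vnorm x.
  move=> x; rewrite Hid -(mulmxA (invmx M')).
  set W := (_ - _) *m x.
  have H1 : vnorm (invmx M' *m W) <= vnorm W / mu.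
    by rewrite ler_pdivlMr // mulrC HM'.
  apply: le_trans H1 _.
  have EW : W = B^T *m ((P' - P) *m (G *m x) - P' *m (C *m (dL *m x))).
    by rewrite /W mulmxBl (mulmxBr B^T ((P' - P) *m (G *m x))) !mulmxA.
  have HW : vnorm W <= b * ((BP * nL) * (g * vnorm x) + (p + BP * nL) * (c * (nL * vnorm x))).
    rewrite EW; apply: le_trans (opnorm_tr B m10 _) _.
    apply: ler_wpM2l => //; apply: le_trans (vnormB _ _) _.
    apply: lerD.
      apply: le_trans (opnorm_bound _ d0 _) _.
      apply: ler_pM => //; first by apply: opnorm_ge0.
      exact: vnorm_ge0.
      exact: opnorm_bound.
    set y := C *m (dL *m x).
    have Hy : vnorm y <= c * (nL * vnorm x).
      apply: le_trans (opnorm_bound _ m20 _) _; apply: ler_wpM2l => //.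
      exact: opnorm_bound.
    have -> : P' *m y = P *m y + (P' - P) *m y by rewrite mulmxBl addrC subrK.
    apply: le_trans (vnormD _ _) _.
    apply: le_trans (_ : p * vnorm y + (BP * nL) * vnorm y <= _).
      apply: lerD; first exact: opnorm_bound.
      apply: le_trans (opnorm_bound _ d0 _) _.
      by apply: ler_wpM2r => //; apply: vnorm_ge0.
    rewrite -mulrDl; apply: ler_wpM2l => //.
    by rewrite addr_ge0 // mulr_ge0 // ltW.
  rewrite ler_pdivrMr //.
  apply: le_trans HW _.
  have vx0 := vnorm_ge0 x.
  have K1 : BP * g + p * c + BP * c * nL <= 2 * X by move: Hsmall; rewrite /X /c /g /p /nL; lra.
  have K2 : 0 <= b * nL * vnorm x by rewrite !mulr_ge0.
  have := ler_wpM2l K2 K1.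
  have -> : b * (BP * nL * (g * vnorm x) + (p + BP * nL) * (c * (nL * vnorm x))) =
            b * nL * vnorm x * (BP * g + p * c + BP * c * nL) by ring.
  move=> H; apply: le_trans H _; rewrite le_eqVlt; apply/orP; left; apply/eqP.
  by field; rewrite gt_eqF.
exact: opnorm_le d0 Hx.
Qed.

End Core.

Theorem mainTheorem17
  (R : rcfType) (d m1 m2 : nat)
  (A : 'M[R]_d) (B : 'M[R]_(d, m1)) (C : 'M[R]_(d, m2))
  (Q : 'M[R]_d) (Ru : 'M[R]_m1) (Rv : 'M[R]_m2)
  (HQ : posdef Q) (HRu : posdef Ru) (HRv : posdef Rv)
  (* standing assumptions on the GARE *)
  (Pst : 'M[R]_d)
  (HPst : gare_minimal_pd A B C Q Ru Rv Pst)
  (HRvP : posdef (Rv - C^T *m Pst *m C))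
  (HLst : posdef (Q - (Lstar A B C Ru Rv Pst)^T *m Rv *m Lstar A B C Ru Rv Pst))
  (zeta : R) (Hzeta0 : 0 < zeta)
  (Hzeta1 : zeta < sigmin (Q - (Lstar A B C Ru Rv Pst)^T *m Rv *m Lstar A B C Ru Rv Pst))
  (* P_L^* : the stabilizing solution of the Riccati equation, for L in Omega *)
  (PL : 'M[R]_(m2, d) -> 'M[R]_d)
  (HPL : forall L, inOmega Q Rv zeta L -> stabilizing_sol A B C Q Ru Rv L (PL L))
  (* local Lipschitz constants of L |-> P_L^* on Omega *)
  (BL BP : R) (HBL : 0 < BL) (HBP : 0 < BP)
  (HLip : forall L L', inOmega Q Rv zeta L -> inOmega Q Rv zeta L' ->
     opnorm (L' - L) <= BL -> opnorm (PL L' - PL L) <= BP * opnorm (L' - L))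
  (HB : B != 0) (HC : C != 0)
  (L L' : 'M[R]_(m2, d))
  (HL : inOmega Q Rv zeta L) (HL' : inOmega Q Rv zeta L')
  (Hclose : opnorm (L' - L) <=
     Num.min BL
       (opnorm B * (BP * opnorm (Atil A C L - B *m Kof A B C Ru (PL L) L)
                    + opnorm (PL L) * opnorm C)
        / (BP * opnorm B * opnorm C))) :
  opnorm (Kof A B C Ru (PL L') L' - Kof A B C Ru (PL L) L) <=
    2 * opnorm B * (BP * opnorm (Atil A C L - B *m Kof A B C Ru (PL L) L)
                    + opnorm (PL L) * opnorm C)
      / sigmin Ru * opnorm (L' - L).
Proof.

Proof.
have dims_pos : forall m n (M : 'M[R]_(m,n)), M != 0 -> (0 < m)%N /\ (0 < n)%N.
  move=> m n; case: m => [|m] M; first by rewrite flatmx0 eqxx.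
  by case: n M => [|n] M; first by rewrite thinmx0 eqxx.
have [d0 m10] := dims_pos _ _ B HB.
have [_ m20] := dims_pos _ _ C HC.
have HP := (HPL L HL).1; have HP' := (HPL L' HL').1.
move: Hclose; rewrite le_min => /andP [Hc1 Hc2].
have HLipP := HLip L L' HL HL' Hc1.
apply: core => //.
set b := opnorm B in Hc2 *; set c := opnorm C in Hc2 *; set p := opnorm (PL L) in Hc2 *.
set g := opnorm (Atil A C L - B *m Kof A B C Ru (PL L) L) in Hc2 *.
set nL := opnorm (L' - L) in Hc2 *.
have b0 : 0 <= b by apply: opnorm_ge0.
have c0 : 0 <= c by apply: opnorm_ge0.
have p0 : 0 <= p by apply: opnorm_ge0.
have g0 : 0 <= g by apply: opnorm_ge0.
have nL0 : 0 <= nL by apply: opnorm_ge0.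
have X0 : 0 <= BP * g + p * c by rewrite addr_ge0 // mulr_ge0 // ltW.
have D0 : 0 <= BP * b * c by rewrite !mulr_ge0 // ltW.
case: (eqVneq (BP * b * c) 0) => [De|Dn].
  move: Hc2; rewrite De invr0 mulr0 => Hn.
  have -> : nL = 0 by apply/eqP; rewrite eq_le Hn nL0.
  by rewrite mulr0.
have Dp : 0 < BP * b * c by rewrite lt_def Dn D0.
move: Hc2; rewrite ler_pdivlMr // => H.
have bp : 0 < b.
  rewrite lt_def b0 andbT; apply: contraNneq Dn => ->; by rewrite mulr0 mul0r.
rewrite -(ler_pM2l bp); apply: le_trans H; rewrite le_eqVlt; apply/orP; left; apply/eqP; ring.
Qed.
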